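(* In the two-block Spice setting, fix $t>0$ and run iterations $k=0,\dots,t$ with a constant scaling factor $\rho=\rho(t)>0$, where for every $k=1,\dots,t$ $$\eta_k\ \ge\ \max\Big\{\eta_{k-1}\sqrt{\tfrac{\mathsf{R}(u^k)}{\mathsf{R}(u^{k-1})}},\ \ \eta_{k-1}\,\tfrac{\mathsf{R}(\bar u^k)\sqrt{\mathsf{R}(u^{k-1})}}{\mathsf{R}(\bar u^{k-1})\sqrt{\mathsf{R}(u^k)}}\Big\}.$$ Define $\bar u_t=\frac{1}{t+1}\sum_{k=0}^t\bar u^k$, $\eta_t^{\mathrm{avg}}=\frac{t+1}{\sum_{k=0}^t1/\eta_k}$, $\bar w_t=\frac{\sum_{k=0}^t\bar w^k/\eta_k}{\sum_{k=0}^t1/\eta_k}$. Then $\bar w_t\in\Omega$ and for every $w^*=(x^*,y^*,\lambda^* )\in\Omega$ with $u^*=(x^*,y^* )$, $$\vartheta(\bar u_t)-\vartheta(u^* )+(\bar w_t-w^* )^\top\frac{1}{\eta_t^{\mathrm{avg}}\rho(t)}\Gamma(w^* )\ \le\ \frac{1}{2\eta_0\rho(t)(t+1)}\|w^*-w^0\|^2_{\mathsf{H}_0},$$ where $\mathsf{H}_0=\mathrm{diag}\big(\sqrt{\mathsf{R}(u^0)}I_n,\ \sqrt{\mathsf{R}(u^0)}I_m,\ \frac{\mu\mathsf{R}(\bar u^0)}{\sqrt{\mathsf{R}(u^0)}}I_p\big)$. In particular, for $\rho(t)=(t+1)^\alpha$ ($\alpha>0$), $\rho(t)=e^{\beta t}$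 ($\beta>0$), $\rho(t)=(t+1)^t$ the right-hand side equals $\frac{\|w^*-w^0\|^2_{\mathsf{H}_0}}{2\eta_0}$ divided by $(t+1)^{1+\alpha}$, $e^{\beta t}(t+1)$, $(t+1)^{t+1}$ respectively.
   Context: Two-block Spice setting. Let $\mathcal{X}\subseteq\mathbb{R}^n$, $\mathcal{Y}\subseteq\mathbb{R}^m$ be nonempty closed convex sets; $f:\mathbb{R}^n\to\mathbb{R}$, $g:\mathbb{R}^m\to\mathbb{R}$ convex; $\phi_1,\dots,\phi_p:\mathbb{R}^n\to\mathbb{R}$ and $\psi_1,\dots,\psi_p:\mathbb{R}^m\to\mathbb{R}$ convex and continuously differentiable; $\Phi=(\phi_1,\dots,\phi_p)^\top$, $\Psi=(\psi_1,\dots,\psi_p)^\top$ with Jacobians $\mathcal{D}\Phi(x)\in\mathbb{R}^{p\times n}$, $\mathcal{D}\Psi(y)\in\mathbb{R}^{p\times m}$. Let $\mathcal{Z}=\mathbb{R}^p_+$, $\Omega=\mathcal{X}\times\mathcal{Y}\times\mathcal{Z}$, $u=(x,y)$, $w=(x,y,\lambda)$, $\vartheta(u)=f(x)+g(y)$, $\Gamma(w)=(\mathcal{D}\Phi(x)^\top\lambda,\ \mathcal{D}\Psi(y)^\top\lambda,\ -\Phi(x)-\Psi(y))$. For symmetric $A$, $\|v\|_A^2:=v^\top Av$; matrix norms are spectral norms; $\mathsf{R}(u):=\|\mathcal{D}\Phi(x)\|^2+\|\mathcal{D}\Psi(y)\|^2$. Fix $\rho>0$, $\mu>1$, $w^0=(x^0,y^0,\lambda^0)\in\Omega$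 and positive $\eta_0,\eta_1,\dots$. Given $w^k=(x^k,y^k,\lambda^k)$, iteration $k$ is: $r_k=\frac{1}{\eta_k}\sqrt{\mathsf{R}(u^k)}$; $\bar x^k=\arg\min_{x\in\mathcal{X}}\{\rho f(x)+\frac{1}{\eta_k}(\lambda^k)^\top\Phi(x)+\frac{r_k}{2}\|x-x^k\|^2\}$; $\bar y^k=\arg\min_{y\in\mathcal{Y}}\{\rho g(y)+\frac{1}{\eta_k}(\lambda^k)^\top\Psi(y)+\frac{r_k}{2}\|y-y^k\|^2\}$; $\bar u^k=(\bar x^k,\bar y^k)$; $s_k=\frac{\mu\mathsf{R}(\bar u^k)}{\eta_k\sqrt{\mathsf{R}(u^k)}}$; $\bar\lambda^k=\arg\max_{\lambda\in\mathcal{Z}}\{\frac{1}{\eta_k}\lambda^\top[\Phi(\bar x^k)+\Psi(\bar y^k)]-\frac{s_k}{2}\|\lambda-\lambda^k\|^2\}=\max\{\lambda^k+\frac{1}{\eta_ks_k}(\Phi(\bar x^k)+\Psi(\bar y^k)),0\}$; $\bar w^k=(\bar x^k,\bar y^k,\bar\lambda^k)$; $w^{k+1}=w^k-M_k(w^k-\bar w^k)$ with $M_k=\begin{pmatrix}I_n&0&-\frac{1}{\eta_kr_k}\mathcal{D}\Phi(\bar x^k)^\top\\0&I_m&-\frac{1}{\eta_kr_k}\mathcal{D}\Psi(\bar y^k)^\top\\0&0&I_p\end{pmatrix}$. It is assumed that $\mathsf{R}(u^k)>0$, $\mathsf{R}(\bar u^k)>0$ for all $k$. Define $Q_k=\begin{pmatrix}r_kI_n&0&-\frac{1}{\eta_k}\mathcal{D}\Phi(\bar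 x^k)^\top\\0&r_kI_m&-\frac{1}{\eta_k}\mathcal{D}\Psi(\bar y^k)^\top\\0&0&s_kI_p\end{pmatrix}$, $H_k=\mathrm{diag}(r_kI_n,r_kI_m,s_kI_p)$, $G_k=\mathrm{diag}\big(r_kI_n,\ r_kI_m,\ s_kI_p-\frac{1}{\eta_k^2r_k}[\mathcal{D}\Phi(\bar x^k)\mathcal{D}\Phi(\bar x^k)^\top+\mathcal{D}\Psi(\bar y^k)\mathcal{D}\Psi(\bar y^k)^\top]\big)$. *)

(* Defs.v *)
From HB Require Import structures.
From mathcomp Require Import all_boot all_order all_algebra.
From mathcomp Require Import all_classical all_reals all_analysis.
Set Implicit Arguments. Unset Strict Implicit. Unset Printing Implicit Defensive.
Import Order.TTheory GRing.Theory Num.Theory.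
Import numFieldNormedType.Exports.
Local Open Scope classical_set_scope.
Local Open Scope ring_scope.

Definition dotv {R : realType} {n : nat} (u v : 'cV[R]_n) : R :=
  \sum_(i < n) u i 0 * v i 0.
Definition sqn {R : realType} {n : nat} (v : 'cV[R]_n) : R := dotv v v.
Definition enorm {R : realType} {n : nat} (v : 'cV[R]_n) : R := Num.sqrt (sqn v).

Definition specnorm {R : realType} {p n : nat} (A : 'M[R]_(p, n)) : R :=
  sup [set enorm (A *m v) | v in [set v : 'cV[R]_n | enorm v <= 1]].

Definition convex_set_cv {R : realType} {n : nat} (C : set 'cV[R]_n) : Prop :=
  forall x y, C x -> C y -> forall a : R, 0 <= a -> a <= 1 ->
    C (a *: x + (1 - a) *: y).
Definition convex_fun {R : realType} {n : nat} (h : 'cV[R]_n -> R) : Prop :=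
  forall x y (a : R), 0 <= a -> a <= 1 ->
    h (a *: x + (1 - a) *: y) <= a * h x + (1 - a) * h y.

Definition C1_with_jacobian {R : realType} {n p : nat}
    (F : 'cV[R]_n -> 'cV[R]_p) (DF : 'cV[R]_n -> 'M[R]_(p, n)) : Prop :=
  (forall x, differentiable F x /\
     forall v, ('d F x : 'cV[R]_n -> 'cV[R]_p) v = DF x *m v)
  /\ continuous DF.

Definition nonneg {R : realType} {p : nat} (l : 'cV[R]_p) : Prop :=
  forall i, 0 <= l i 0.

Definition posPart {R : realType} {p : nat} (v : 'cV[R]_p) : 'cV[R]_p :=
  \col_i Num.max (v i 0) 0.

Definition Rfun {R : realType} {n m p : nat}
    (DPhi : 'cV[R]_n -> 'M[R]_(p, n)) (DPsi : 'cV[R]_m -> 'M[R]_(p, m))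
    (x : 'cV[R]_n) (y : 'cV[R]_m) : R :=
  specnorm (DPhi x) ^+ 2 + specnorm (DPsi y) ^+ 2.

(* Main.v *)
Require Import Defs.
From HB Require Import structures.
From mathcomp Require Import all_boot all_order all_algebra.
From mathcomp Require Import all_classical all_reals all_analysis.
From mathcomp Require Import ring lra.
Import Order.TTheory GRing.Theory Num.Theory.
Import numFieldNormedType.Exports.
Local Open Scope classical_set_scope.
Local Open Scope ring_scope.
Set Implicit Arguments. Unset Strict Implicit. Unset Printing Implicit Defensive.



Lemma dotvC (R : realType) n (u v : 'cV[R]_n) : dotv u v = dotv v u.
Proof. by rewrite /dotv; apply: eq_bigr => i _; rewrite mulrC. Qed.

Lemma dotvDl (R : realType) n (u w v : 'cV[R]_n) : dotv (u + w) v = dotv u v + dotv w v.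
Proof. by rewrite /dotv -big_split; apply: eq_bigr => i _; rewrite mxE mulrDl. Qed.

Lemma dotvDr (R : realType) n (u w v : 'cV[R]_n) : dotv v (u + w) = dotv v u + dotv v w.
Proof. by rewrite dotvC dotvDl !(dotvC v). Qed.

Lemma dotvZl (R : realType) n a (u v : 'cV[R]_n) : dotv (a *: u) v = a * dotv u v.
Proof. by rewrite /dotv mulr_sumr; apply: eq_bigr => i _; rewrite mxE mulrA. Qed.

Lemma dotvZr (R : realType) n a (u v : 'cV[R]_n) : dotv v (a *: u) = a * dotv v u.
Proof. by rewrite dotvC dotvZl dotvC. Qed.

Lemma dotvNl (R : realType) n (u v : 'cV[R]_n) : dotv (- u) v = - dotv u v.
Proof. by rewrite -scaleN1r dotvZl mulN1r. Qed.

Lemma dotvNr (R : realType) n (u v : 'cV[R]_n) : dotv v (- u) = - dotv v u.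
Proof. by rewrite dotvC dotvNl dotvC. Qed.

Lemma dotvBl (R : realType) n (u w v : 'cV[R]_n) : dotv (u - w) v = dotv u v - dotv w v.
Proof. by rewrite dotvDl dotvNl. Qed.

Lemma dotvBr (R : realType) n (u w v : 'cV[R]_n) : dotv v (u - w) = dotv v u - dotv v w.
Proof. by rewrite dotvDr dotvNr. Qed.

Lemma dotv0l (R : realType) n (v : 'cV[R]_n) : dotv 0 v = 0.
Proof. by rewrite /dotv big1 // => i _; rewrite mxE mul0r. Qed.

Lemma dotv_mulT (R : realType) p n (A : 'M[R]_(p, n)) u w :
  dotv u (A^T *m w) = dotv (A *m u) w.
Proof.
rewrite /dotv.
under eq_bigr do rewrite mxE big_distrr /=.
under [RHS]eq_bigr do rewrite mxE big_distrl /=.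
rewrite exchange_big; apply: eq_bigr => i _; apply: eq_bigr => j _.
rewrite mxE; ring.
Qed.

Lemma sqn_ge0 (R : realType) n (v : 'cV[R]_n) : 0 <= sqn v.
Proof. by apply: sumr_ge0 => i _; rewrite -expr2 sqr_ge0. Qed.

Lemma sqn_eq0 (R : realType) n (v : 'cV[R]_n) : sqn v = 0 -> v = 0.
Proof.
move=> /eqP; rewrite /sqn /dotv psumr_eq0 => [/allP H|i _]; last first.
  by rewrite -expr2 sqr_ge0.
apply/matrixP => i j; rewrite (ord1 j) mxE.
by have := H i (mem_index_enum _); rewrite mulf_eq0 orbb => /eqP.
Qed.

Lemma sqn_expand (R : realType) n a b (u v : 'cV[R]_n) :
  sqn (a *: u - b *: v) = a ^+ 2 * sqn u - 2 * a * b * dotv u v + b ^+ 2 * sqn v.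
Proof.
rewrite /sqn dotvBl !dotvBr !dotvZl !dotvZr (dotvC v u); ring.
Qed.

Lemma CS (R : realType) n (u v : 'cV[R]_n) : dotv u v ^+ 2 <= sqn u * sqn v.
Proof.
have := sqn_ge0 v; rewrite le_eqVlt => /orP [/eqP/esym sv0|svp].
  by rewrite (sqn_eq0 sv0) dotvC dotv0l expr0n /= mulr_ge0 // sqn_ge0.
have := sqn_ge0 (sqn v *: u - dotv u v *: v).
rewrite sqn_expand => H.
have su := sqn_ge0 u.
nra.
Qed.

Lemma sqnZ (R : realType) n a (v : 'cV[R]_n) : sqn (a *: v) = a ^+ 2 * sqn v.
Proof. by rewrite /sqn dotvZl dotvZr mulrA expr2. Qed.

Lemma abs_le1 (R : realType) (w : R) : w * w <= 1 -> `|w| <= 1.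
Proof. move=> h; rewrite ler_norml; apply/andP; split; nra. Qed.

Lemma specnorm_bound (R : realType) p n (A : 'M[R]_(p, n)) v :
  sqn (A *m v) <= specnorm A ^+ 2 * sqn v.
Proof.
set E := [set enorm (A *m v) | v in [set v : 'cV[R]_n | enorm v <= 1]].
have hub : has_ubound E.
  exists (Num.sqrt (\sum_i (\sum_j `|A i j|) ^+ 2)) => _ [w hw <-].
  rewrite /enorm ler_sqrt; last by apply: sumr_ge0 => i _; rewrite sqr_ge0.
  have w1 : sqn w <= 1.
    by move: hw; rewrite /= /enorm -{1}sqrtr1 ler_sqrt.
  have wj : forall j, `|w j 0| <= 1.
    move=> j; apply: abs_le1; apply: le_trans w1.
    rewrite /sqn /dotv (bigD1 j) //= lerDl.
    by apply: sumr_ge0 => i _; rewrite -expr2 sqr_ge0.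
  apply: ler_sum => i _.
  have hc : `|(A *m w) i 0| <= \sum_j `|A i j|.
    rewrite mxE; apply: le_trans (ler_norm_sum _ _ _) _.
    by apply: ler_sum => j _; rewrite normrM ler_piMr.
  apply: le_trans (_ : `|(A *m w) i 0| * `|(A *m w) i 0| <= _).
    by rewrite -normrM ler_norm.
  by rewrite expr2 ler_pM.
have := sqn_ge0 v; rewrite le_eqVlt => /orP [/eqP/esym sv0|svp].
  by rewrite (sqn_eq0 sv0) mulmx0 /sqn !dotv0l mulr0.
set ev := enorm v.
have ev2 : ev ^+ 2 = sqn v by rewrite sqr_sqrtr // sqn_ge0.
have evp : 0 < ev by rewrite sqrtr_gt0.
have Eu : E (enorm (A *m (ev^-1 *: v))).
  exists (ev^-1 *: v) => //=.
  rewrite /enorm sqnZ -ev2 exprVn mulVf ?sqrtr1 //.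
  by rewrite expf_eq0 /= gt_eqF.
have := ub_le_sup hub Eu.
rewrite -/(specnorm A) -scalemxAr => Hs.
have : sqn (ev^-1 *: (A *m v)) <= specnorm A ^+ 2.
  rewrite -[sqn _]sqr_sqrtr ?sqn_ge0 //.
  by apply: lerXn2r => //; rewrite ?nnegrE ?sqrtr_ge0 // (le_trans _ Hs) // sqrtr_ge0.
rewrite sqnZ exprVn -ev2 => H.
have ev2p : 0 < ev ^+ 2 by rewrite exprn_gt0.
by rewrite -ler_pdivrMr // mulrC.
Qed.

Lemma specnormT_bound (R : realType) p n (A : 'M[R]_(p, n)) d :
  sqn (A^T *m d) <= specnorm A ^+ 2 * sqn d.
Proof.
set w := A^T *m d.
have e1 : sqn w = dotv (A *m w) d by rewrite {1}/sqn {2}/w dotv_mulT.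
have h1 := CS (A *m w) d.
have h2 := specnorm_bound A w.
rewrite -e1 in h1.
have sw := sqn_ge0 w; have sd := sqn_ge0 d; have sa := sqn_ge0 (A *m w).
have S2 : 0 <= specnorm A ^+ 2 by rewrite sqr_ge0.
move: sw; rewrite le_eqVlt => /orP [/eqP <-|swp]; first by rewrite mulr_ge0.
have : sqn w * sqn w <= (specnorm A ^+ 2 * sqn d) * sqn w.
  rewrite -expr2 (le_trans h1) //.
  by apply: le_trans (ler_wpM2r sd h2) _; rewrite mulrAC.
by rewrite ler_pM2r.
Qed.




Lemma comb_split (R : realType) n (S wN : R) (s v : 'cV[R]_n) : 0 < S -> 0 < wN ->
  (S + wN)^-1 *: (s + wN *: v) =
  (S / (S + wN)) *: (S^-1 *: s) + (1 - S / (S + wN)) *: v.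
Proof.
move=> S0 w0.
have Sw : S + wN != 0 by rewrite gt_eqF // addr_gt0.
rewrite scalerDr !scalerA; congr (_ *: _ + _ *: _); field.
  by rewrite Sw gt_eqF.
by [].
Qed.

Lemma sum_pos (R : realType) (N : nat) (w : nat -> R) : (forall k, (k < N)%N -> 0 < w k) ->
  (0 < N)%N -> 0 < \sum_(0 <= k < N) w k.
Proof.
elim: N => [//|N IH] Hw _; rewrite big_nat_recr //=.
case: N IH Hw => [_ Hw|N IH Hw]; first by rewrite big_geq // add0r Hw.
by rewrite addr_gt0 // ?IH // => [k hk|]; apply: Hw; rewrite ?ltnS // ltnW.
Qed.

Lemma convex_comb (R : realType) n (C : set 'cV[R]_n) (N : nat) (w : nat -> R) (v : nat -> 'cV[R]_n) :
  convex_set_cv C -> (forall k, (k < N)%N -> 0 < w k) ->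
  (forall k, (k < N)%N -> C (v k)) -> (0 < N)%N ->
  C ((\sum_(0 <= k < N) w k)^-1 *: \sum_(0 <= k < N) (w k *: v k)).
Proof.
move=> Cc; elim: N => [//|N IH] Hw Hv _; rewrite !big_nat_recr //=.
case: N IH Hw Hv => [_ Hw Hv|N IH Hw Hv].
  rewrite !big_geq // !add0r scalerA mulVf ?scale1r; first exact: Hv.
  by rewrite gt_eqF // Hw.
have Hw' : forall k, (k < N.+1)%N -> 0 < w k by move=> k hk; apply: Hw; rewrite ltnW.
have Sp := sum_pos Hw' isT.
rewrite comb_split //; last by apply: Hw.
apply: Cc.
- by apply: IH => // k hk; apply: Hv; rewrite ltnW.
- by apply: Hv.
- by rewrite divr_ge0 // ltW // addr_gt0 // Hw.
- by rewrite ler_pdivrMr ?mul1r ?lerDl ?ltW ?Hw // addr_gt0 // Hw.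
Qed.

Lemma jensen (R : realType) n (h : 'cV[R]_n -> R) (N : nat) (w : nat -> R) (v : nat -> 'cV[R]_n) :
  convex_fun h -> (forall k, (k < N)%N -> 0 < w k) -> (0 < N)%N ->
  h ((\sum_(0 <= k < N) w k)^-1 *: \sum_(0 <= k < N) (w k *: v k)) <=
  (\sum_(0 <= k < N) w k)^-1 * \sum_(0 <= k < N) (w k * h (v k)).
Proof.
move=> Cc; elim: N => [//|N IH] Hw _; rewrite !big_nat_recr //=.
case: N IH Hw => [_ Hw|N IH Hw].
  rewrite !big_geq // !add0r scalerA mulVf ?scale1r ?mulKf //;
  by rewrite gt_eqF // Hw.
have Hw' : forall k, (k < N.+1)%N -> 0 < w k by move=> k hk; apply: Hw; rewrite ltnW.
have Sp := sum_pos Hw' isT.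
have wN := Hw N.+1 (ltnSn _).
rewrite comb_split //.
set S := \sum_(0 <= k < N.+1) w k.
set T := \sum_(0 <= k < N.+1) w k * h (v k).
apply: le_trans (Cc _ _ _ _ _) _.
- by rewrite divr_ge0 // ltW // addr_gt0.
- by rewrite ler_pdivrMr ?mul1r ?lerDl ?ltW // addr_gt0.
have IH' := IH Hw' isT; rewrite -/S -/T in IH'.
have a0 : 0 <= S / (S + w N.+1) by rewrite divr_ge0 // ltW // addr_gt0.
apply: le_trans (lerD (ler_wpM2l a0 IH') (lexx _)) _.
rewrite le_eqVlt; apply/orP; left; apply/eqP; field.
by rewrite !gt_eqF // addr_gt0.
Qed.

Lemma proj_vi (R : realType) p (z l : 'cV[R]_p) : nonneg l ->
  0 <= dotv (l - posPart z) (posPart z - z).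
Proof.
move=> hl; apply: sumr_ge0 => i _; rewrite !mxE.
have [h|h] := leP (z i 0) 0.
  by rewrite subr0 sub0r mulr_ge0 // ?hl // oppr_ge0.
by rewrite subrr mulr0.
Qed.

Lemma posPart_nonneg (R : realType) p (z : 'cV[R]_p) : nonneg (posPart z).
Proof. by move=> i; rewrite mxE le_max lexx orbT. Qed.

Lemma nonneg_convex (R : realType) p : convex_set_cv (@nonneg R p).
Proof.
move=> a b ha hb c c0 c1 i; rewrite !mxE.
by rewrite addr_ge0 // mulr_ge0 // ?subr_ge0 // ?ha ?hb.
Qed.

Lemma key (R : realType) n p (F : 'cV[R]_n -> 'cV[R]_p) DF x v :
  C1_with_jacobian F DF ->
  (fun h : R => h^-1 *: (F (h *: v + x) - F x)) @ 0^' --> DF x *m v.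
Proof.
move=> [H _]; have [dF dE] := H x.
have dv : derivable F x v by apply: diff_derivable.
have := deriveE v dF. rewrite dE /derive => <-.
exact: dv.
Qed.

Lemma entry_le (R : realType) p q (M : 'M[R]_(p, q)) i j : `|M i j| <= `|M|.
Proof.
have -> : `|M| = mx_norm M by [].
rewrite mx_normrE.
exact: (@le_bigmax _ _ _ 0 (fun ij : 'I_p * 'I_q => `|M ij.1 ij.2|) (i, j)).
Qed.

Lemma key2 (R : realType) n p (F : 'cV[R]_n -> 'cV[R]_p) DF x v (e b : R) :
  C1_with_jacobian F DF -> 0 < e -> 0 < b ->
  exists a, 0 < a /\ a <= b /\ forall i,
    `|(DF x *m v) i 0 - (a^-1 *: (F (a *: v + x) - F x)) i 0| < e.
Proof.
move=> HF e0 b0.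
have := @key _ _ _ F DF x v HF.
move=> /cvgrPdist_lt /(_ e e0).
move=> /nbhs_ballP [d /= d0 Hd].
pose a := Num.min (d / 2) b.
have a0 : 0 < a by rewrite lt_min b0 divr_gt0.
exists a; split => //; split; first by rewrite ge_min lexx orbT.
move=> i.
have : `|DF x *m v - a^-1 *: (F (a *: v + x) - F x)| < e.
  apply: Hd; last by rewrite gt_eqF.
  rewrite /ball /= sub0r normrN gtr0_norm //.
  apply: (@le_lt_trans _ _ (d / 2)); first by rewrite ge_min lexx.
  by rewrite ltr_pdivrMr // ltr_pMr // ltr1n.
move=> H; apply: le_lt_trans H.
have := @entry_le _ _ _ (DF x *m v - a^-1 *: (F (a *: v + x) - F x)) i 0.
by rewrite !mxE.
Qed.

Lemma dot_close (R : realType) p (l D q : 'cV[R]_p) e :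
  (forall i, `|D i 0 - q i 0| < e) ->
  `|dotv l q - dotv l D| <= (\sum_i `|l i 0|) * e.
Proof.
move=> H; rewrite -dotvBr /dotv mulr_suml.
apply: le_trans (ler_norm_sum _ _ _) _; apply: ler_sum => i _.
rewrite !mxE normrM ler_wpM2l // distrC; exact: ltW (H i).
Qed.



Lemma comb_eq (R : realType) n a (z x : 'cV[R]_n) : a *: (z - x) + x = a *: z + (1 - a) *: x.
Proof. by rewrite scalerBr scalerBl scale1r addrA addrAC. Qed.

Lemma sqn_addZ (R : realType) n a (v w : 'cV[R]_n) :
  sqn (a *: v + w) = a ^+ 2 * sqn v + 2 * a * dotv v w + sqn w.
Proof. rewrite /sqn !dotvDl !dotvDr !dotvZl !dotvZr (dotvC w v); ring. Qed.

Lemma grad_ineq (R : realType) n p (F : 'cV[R]_n -> 'cV[R]_p) DF (l : 'cV[R]_p) x z :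
  C1_with_jacobian F DF -> (forall i : 'I_p, convex_fun (fun w => F w i 0)) ->
  nonneg l -> dotv l (DF x *m (z - x)) <= dotv l (F z - F x).
Proof.
move=> HF Fc hl; apply/ler_addgt0Pr => e e0.
set L := \sum_i `|l i 0|.
have L0 : 0 <= L by apply: sumr_ge0.
have K0 : 0 < L + 1 by lra.
have [a [a0 [a1 Ha]]] := key2 x (z - x) HF (divr_gt0 e0 K0) ltr01.
set q := a^-1 *: (F (a *: (z - x) + x) - F x).
have Hq : forall i, q i 0 <= (F z - F x) i 0.
  move=> i; rewrite /q !mxE comb_eq.
  have := Fc i z x a (ltW a0) a1.
  move: (F (a *: z + (1 - a) *: x) i 0) (F z i 0) (F x i 0) => u w y h.
  rewrite mulrC ler_pdivrMr //; nra.
have h1 := dot_close l Ha.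
have h2 : dotv l q <= dotv l (F z - F x).
  by apply: ler_sum => i _; apply: ler_wpM2l; [apply: hl|apply: Hq].
have h3 : L * (e / (L + 1)) <= e.
  rewrite mulrA ler_pdivrMr //; nra.
move: h1; rewrite -/L ler_norml => /andP [h1 _].
lra.
Qed.

Lemma sub_vi (R : realType) n p (X : set 'cV[R]_n) (f : 'cV[R]_n -> R) F DF (l : 'cV[R]_p)
  (rho c r : R) x0 xb z :
  C1_with_jacobian F DF -> convex_set_cv X -> convex_fun f -> 0 <= rho ->
  X xb -> X z ->
  (forall z, X z -> rho * f xb + c * dotv l (F xb) + r / 2 * sqn (xb - x0)
     <= rho * f z + c * dotv l (F z) + r / 2 * sqn (z - x0)) ->
  0 <= rho * (f z - f xb) + c * dotv l (DF xb *m (z - xb)) + r * dotv (z - xb) (xb - x0).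
Proof.
move=> HF Xc fc rho0 Xb Xz Hm; apply/ler_addgt0Pr => e e0.
set v := z - xb.
set L := \sum_i `|(c *: l) i 0|.
have L0 : 0 <= L by apply: sumr_ge0.
have K0 : 0 < 2 * (L + 1) by lra.
set sv := sqn v.
have sv0 : 0 <= sv by apply: sqn_ge0.
set K2 := `|r| / 2 * sv + 1.
have K20 : 0 < K2 by rewrite /K2; have := normr_ge0 r; nra.
have b0 : 0 < Num.min 1 (e / (2 * K2)) by rewrite lt_min ltr01 divr_gt0 // mulr_gt0.
have [a [a0 [ab Ha]]] := key2 xb v HF (divr_gt0 e0 K0) b0.
have a1 : a <= 1 by apply: le_trans ab _; rewrite ge_min lexx.
have a2 : a <= e / (2 * K2) by apply: le_trans ab _; rewrite ge_min lexx orbT.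
set xa := a *: v + xb.
have Xa : X xa by rewrite /xa /v comb_eq; apply: Xc => //; apply: ltW.
have Hmin := Hm xa Xa.
have hf : f xa <= a * f z + (1 - a) * f xb by rewrite /xa /v comb_eq; apply: fc => //; apply: ltW.
set q := a^-1 *: (F xa - F xb).
have eqF : dotv l (F xa) = dotv l (F xb) + a * dotv l q.
  rewrite /q dotvZr mulrA mulfV ?gt_eqF // mul1r dotvBr; ring.
have eqS : sqn (xa - x0) = sqn (xb - x0) + 2 * a * dotv v (xb - x0) + a ^+ 2 * sv.
  rewrite /xa -addrA sqn_addZ -/sv; ring.
rewrite eqF eqS in Hmin.
set P := dotv v (xb - x0) in Hmin *.
set Qt := dotv l q in Hmin *.
set A := f z in hf *.
have h1 : 0 <= a * (rho * (A - f xb) + c * Qt + r * P + r / 2 * a * sv).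
  have : rho * f xa <= rho * (a * A + (1 - a) * f xb) by apply: ler_wpM2l.
  move=> hr; nra.
have h1' : 0 <= rho * (A - f xb) + c * Qt + r * P + r / 2 * a * sv.
  by rewrite -(pmulr_rge0 _ a0).
have h2 := dot_close (c *: l) Ha; rewrite -/L ler_norml in h2.
move: h2 => /andP [_ h2].
rewrite /q !dotvZl in h2.
have h4 : L * (e / (2 * (L + 1))) <= e / 2.
  rewrite mulrA ler_pdivrMr //; nra.
have h5 : r / 2 * a * sv <= e / 2.
  have : r / 2 * a * sv <= K2 * a.
    rewrite /K2; have := ler_norm r; have := normr_ge0 r; have := mulr_ge0 (ltW a0) sv0; nra.
  move=> h; apply: le_trans h _.
  have : K2 * a <= K2 * (e / (2 * K2)) by apply: ler_wpM2l => //; apply: ltW.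
  move=> h'; apply: le_trans h' _.
  have -> : K2 * (e / (2 * K2)) = e / 2 by field; rewrite gt_eqF.
  by [].
rewrite -/xa -/q -/Qt in h2.
lra.
Qed.



Lemma id3 (R : realType) n (a b c e : 'cV[R]_n) :
  2 * dotv (a - e) (c - b) = sqn (a - b) - sqn (a - c) + sqn (c - e) - sqn (e - b).
Proof.
have -> : c - b = (c - e) + (e - b) by rewrite addrA subrK.
have -> : a - b = (a - e) + (e - b) by rewrite addrA subrK.
have -> : a - c = (a - e) - (c - e) by rewrite opprB addrA subrK.
move: (a - e) (e - b) (c - e) => A B C.
rewrite /sqn !dotvDl !dotvDr ?dotvBl ?dotvBr ?dotvNl ?dotvNr (dotvC B A) (dotvC C A) ?(dotvC B C) ?(dotvC C B); ring.
Qed.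

Lemma id2 (R : realType) n (a b e : 'cV[R]_n) :
  2 * dotv (a - e) (e - b) = sqn (a - b) - sqn (a - e) - sqn (e - b).
Proof.
have -> : a - b = (a - e) + (e - b) by rewrite addrA subrK.
move: (a - e) (e - b) => A B.
rewrite /sqn !dotvDl !dotvDr (dotvC B A); ring.
Qed.

Lemma sqnN (R : realType) n (v : 'cV[R]_n) : sqn (- v) = sqn v.
Proof. by rewrite /sqn dotvNl dotvNr opprK. Qed.

Lemma upd_eq (R : realType) n (a b w : 'cV[R]_n) : a - ((a - b) - w) = b + w.
Proof. apply/matrixP => i j; rewrite !mxE; ring. Qed.



Lemma step (R : realType) n m p (X : set 'cV[R]_n) (Y : set 'cV[R]_m) (f : 'cV[R]_n -> R) (g : 'cV[R]_m -> R)
  (Phi : 'cV[R]_n -> 'cV[R]_p) (Psi : 'cV[R]_m -> 'cV[R]_p)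
  (DPhi : 'cV[R]_n -> 'M[R]_(p, n)) (DPsi : 'cV[R]_m -> 'M[R]_(p, m))
  (rho mu eta r s : R) x0 xb x1 y0 yb y1 l0 lb l1 xs ys ls :
  convex_set_cv X -> convex_set_cv Y -> convex_fun f -> convex_fun g ->
  (forall i : 'I_p, convex_fun (fun z => Phi z i 0)) ->
  (forall i : 'I_p, convex_fun (fun z => Psi z i 0)) ->
  C1_with_jacobian Phi DPhi -> C1_with_jacobian Psi DPsi ->
  0 < rho -> 1 < mu -> 0 < eta ->
  0 < Rfun DPhi DPsi x0 y0 -> 0 < Rfun DPhi DPsi xb yb ->
  r = eta^-1 * Num.sqrt (Rfun DPhi DPsi x0 y0) ->
  s = mu * Rfun DPhi DPsi xb yb / (eta * Num.sqrt (Rfun DPhi DPsi x0 y0)) ->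
  X xb -> (forall z, X z -> rho * f xb + eta^-1 * dotv l0 (Phi xb) + r / 2 * sqn (xb - x0)
     <= rho * f z + eta^-1 * dotv l0 (Phi z) + r / 2 * sqn (z - x0)) ->
  Y yb -> (forall z, Y z -> rho * g yb + eta^-1 * dotv l0 (Psi yb) + r / 2 * sqn (yb - y0)
     <= rho * g z + eta^-1 * dotv l0 (Psi z) + r / 2 * sqn (z - y0)) ->
  lb = posPart (l0 + (eta * s)^-1 *: (Phi xb + Psi yb)) ->
  x1 = x0 - ((x0 - xb) - (eta * r)^-1 *: ((DPhi xb)^T *m (l0 - lb))) ->
  y1 = y0 - ((y0 - yb) - (eta * r)^-1 *: ((DPsi yb)^T *m (l0 - lb))) ->
  l1 = l0 - (l0 - lb) ->
  X xs -> Y ys -> nonneg ls ->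
  rho * (f xb + g yb - (f xs + g ys)) + eta^-1 *
    (dotv (xb - xs) ((DPhi xs)^T *m ls) + dotv (yb - ys) ((DPsi ys)^T *m ls)
     + dotv (lb - ls) (- Phi xs - Psi ys))
  <= 1 / 2 * (r * sqn (xs - x0) + r * sqn (ys - y0) + s * sqn (ls - l0))
     - 1 / 2 * (r * sqn (xs - x1) + r * sqn (ys - y1) + s * sqn (ls - l1)).
Proof.
move=> Xc Yc fc gc Phic Psic HPhi HPsi rho0 mu1 eta0 R00 Rb0 er es Xb Hmx Yb Hmy
  Hlb Hx1 Hy1 Hl1 Xs Ys hls.
set c := eta^-1 in Hmx Hmy *.
have c0 : 0 < c by rewrite invr_gt0.
set R0 := Rfun DPhi DPsi x0 y0 in er es.
set Rb := Rfun DPhi DPsi xb yb in es.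
have sq0 : 0 < Num.sqrt R0 by rewrite sqrtr_gt0.
have r0 : 0 < r by rewrite er mulr_gt0.
have s0 : 0 < s by rewrite es divr_gt0 ?mulr_gt0 // (lt_trans ltr01).
have lbn : nonneg lb by rewrite Hlb; apply: posPart_nonneg.
set d := l0 - lb in Hx1 Hy1.
set k := (eta * r)^-1 in Hx1 Hy1.
set gx := (DPhi xb)^T *m d in Hx1.
set gy := (DPsi yb)^T *m d in Hy1.
rewrite upd_eq in Hx1; rewrite upd_eq in Hy1.
have el1 : l1 = lb by rewrite Hl1 opprB addrC subrK.
have rk : r * k = c by rewrite /k /c; field; rewrite !gt_eqF.
have sk : s * (eta * s)^-1 = c by rewrite /c; field; rewrite !gt_eqF.
have VX := sub_vi HPhi Xc fc (ltW rho0) Xb Xs Hmx.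
have VY := sub_vi HPsi Yc gc (ltW rho0) Yb Ys Hmy.
have VL := proj_vi (l0 + (eta * s)^-1 *: (Phi xb + Psi yb)) hls.
rewrite -Hlb in VL.
have C1x := grad_ineq xs xb HPhi Phic hls.
have C1y := grad_ineq ys yb HPsi Psic hls.
have C2x := grad_ineq xb xs HPhi Phic lbn.
have C2y := grad_ineq yb ys HPsi Psic lbn.
have eL : lb - (l0 + (eta * s)^-1 *: (Phi xb + Psi yb))
          = (lb - l0) - (eta * s)^-1 *: (Phi xb + Psi yb).
  by rewrite opprD addrA.
have eP : dotv (ls - lb) (Phi xb + Psi yb) = dotv ls (Phi xb) + dotv ls (Psi yb)
   - dotv lb (Phi xb) - dotv lb (Psi yb) by rewrite dotvBl !dotvDr; ring.
rewrite eL dotvBr dotvZr eP in VL.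
have VL' := mulr_ge0 (ltW s0) VL.
rewrite mulrBr mulrA sk in VL'.
have iL : 2 * (s * dotv (ls - lb) (lb - l0)) =
   s * (sqn (ls - l0) - sqn (ls - lb) - sqn (lb - l0)) by rewrite mulrCA id2.
have eX : 2 * (r * dotv (xs - xb) (x1 - x0)) =
   r * (sqn (xs - x0) - sqn (xs - x1) + sqn (x1 - xb) - sqn (xb - x0)) by rewrite mulrCA id3.
have eX2 : r * dotv (xs - xb) (x1 - x0) = r * dotv (xs - xb) (xb - x0)
   + c * (dotv l0 (DPhi xb *m (xs - xb)) - dotv lb (DPhi xb *m (xs - xb))).
  have -> : x1 - x0 = (xb - x0) + k *: gx by rewrite Hx1 addrAC.
  rewrite dotvDr dotvZr /gx dotv_mulT (dotvC (DPhi xb *m _) d).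
  by rewrite /d mulrDr mulrA rk [dotv (l0 - lb) _]dotvBl.
have eY : 2 * (r * dotv (ys - yb) (y1 - y0)) =
   r * (sqn (ys - y0) - sqn (ys - y1) + sqn (y1 - yb) - sqn (yb - y0)) by rewrite mulrCA id3.
have eY2 : r * dotv (ys - yb) (y1 - y0) = r * dotv (ys - yb) (yb - y0)
   + c * (dotv l0 (DPsi yb *m (ys - yb)) - dotv lb (DPsi yb *m (ys - yb))).
  have -> : y1 - y0 = (yb - y0) + k *: gy by rewrite Hy1 addrAC.
  rewrite dotvDr dotvZr /gy dotv_mulT (dotvC (DPsi yb *m _) d).
  by rewrite /d mulrDr mulrA rk [dotv (l0 - lb) _]dotvBl.
have hN : r * sqn (x1 - xb) + r * sqn (y1 - yb) <= s * sqn (lb - l0).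
  have -> : x1 - xb = k *: gx by rewrite Hx1 addrC addKr.
  have -> : y1 - yb = k *: gy by rewrite Hy1 addrC addKr.
  have -> : lb - l0 = - d by rewrite /d opprB.
  rewrite !sqnZ sqnN.
  have hgx := specnormT_bound (DPhi xb) d.
  have hgy := specnormT_bound (DPsi yb) d.
  have eRb : Rb = specnorm (DPhi xb) ^+ 2 + specnorm (DPsi yb) ^+ 2 by [].
  have K0 : 0 < r * k ^+ 2 by rewrite mulr_gt0 // exprn_gt0 // invr_gt0 mulr_gt0.
  have ess : s = mu * Rb * (r * k ^+ 2).
    rewrite es /k er; field.
    by rewrite !gt_eqF.
  have sd := sqn_ge0 d.
  rewrite ess.
  have -> : r * (k ^+ 2 * sqn gx) + r * (k ^+ 2 * sqn gy)
     = (r * k ^+ 2) * (sqn gx + sqn gy) by ring.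
  have -> : mu * Rb * (r * k ^+ 2) * sqn d = (r * k ^+ 2) * (mu * Rb * sqn d) by ring.
  apply: ler_wpM2l; first exact: ltW K0.
  have Rb0' : 0 < Rb by [].
  rewrite -/gx in hgx; rewrite -/gy in hgy.
  rewrite eRb in Rb0' *.
  set Sx := specnorm (DPhi xb) ^+ 2 in hgx Rb0' *.
  set Sy := specnorm (DPsi yb) ^+ 2 in hgy Rb0' *.
  have h := mulr_ge0 (ltW Rb0') sd.
  nra.
rewrite el1.
rewrite dotvBr in C1x; rewrite dotvBr in C1y; rewrite dotvBr in C2x; rewrite dotvBr in C2y.
have C1x' := ler_wpM2l (ltW c0) C1x.
have C1y' := ler_wpM2l (ltW c0) C1y.
have C2x' := ler_wpM2l (ltW c0) C2x.
have C2y' := ler_wpM2l (ltW c0) C2y.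
rewrite !dotv_mulT (dotvC _ ls) (dotvC _ ls) dotvBl !dotvBr !dotvNr.
have := sqn_ge0 (xb - x0); have := sqn_ge0 (yb - y0).
have hr := ltW r0.
move=> h1 h2.
have h1' := mulr_ge0 hr h1.
have h2' := mulr_ge0 hr h2.
lra.
Qed.



Lemma dotv_suml (R : realType) n (N : nat) (F : nat -> 'cV[R]_n) a :
  dotv (\sum_(0 <= k < N) F k) a = \sum_(0 <= k < N) dotv (F k) a.
Proof.
elim: N => [|N IH]; first by rewrite !big_geq // dotv0l.
by rewrite !big_nat_recr //= dotvDl IH.
Qed.

Lemma wdot (R : realType) n N (w : nat -> R) (v : nat -> 'cV[R]_n) xs a :
  \sum_(0 <= k < N) w k != 0 ->
  \sum_(0 <= k < N) w k * dotv (v k - xs) a =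
  (\sum_(0 <= k < N) w k) *
    dotv ((\sum_(0 <= k < N) w k)^-1 *: \sum_(0 <= k < N) (w k *: v k) - xs) a.
Proof.
move=> S0.
rewrite -dotvZl scalerBr scalerA mulfV // scale1r.
have -> : \sum_(0 <= k < N) w k * dotv (v k - xs) a
    = dotv (\sum_(0 <= k < N) (w k *: (v k - xs))) a.
  by rewrite dotv_suml; apply: eq_bigr => k _; rewrite dotvZl.
congr dotv.
rewrite (eq_bigr (fun k => w k *: v k - w k *: xs)); last by move=> k _; rewrite scalerBr.
by rewrite sumrB scaler_suml.
Qed.

Lemma ujensen (R : realType) n (h : 'cV[R]_n -> R) (N : nat) (v : nat -> 'cV[R]_n) :
  convex_fun h -> (0 < N)%N ->
  h (N%:R^-1 *: \sum_(0 <= k < N) v k) <= N%:R^-1 * \sum_(0 <= k < N) h (v k).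
Proof.
move=> hc N0.
have := @jensen R n h N (fun _ => 1) v hc (fun _ _ => ltr01) N0.
rewrite sumr_const_nat subn0.
have -> : \sum_(0 <= k < N) (1 : R) *: v k = \sum_(0 <= k < N) v k.
  by apply: eq_bigr => k _; rewrite scale1r.
have -> : \sum_(0 <= k < N) (1 : R) * h (v k) = \sum_(0 <= k < N) h (v k).
  by apply: eq_bigr => k _; rewrite mul1r.
by [].
Qed.

Lemma mono_r (R : realType) (a b A B : R) : 0 < a -> 0 < b -> 0 < A -> 0 < B ->
  a * (A / B) <= b -> b^-1 * A <= a^-1 * B.
Proof.
move=> a0 b0 A0 B0 H.
rewrite mulrA ler_pdivrMr // in H.
rewrite -subr_ge0.
have -> : a^-1 * B - b^-1 * A = (b * B - a * A) / (a * b).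
  by field; rewrite !gt_eqF.
by rewrite divr_ge0 ?subr_ge0 // ltW // mulr_gt0.
Qed.

Lemma mono_s (R : realType) (mu a b x y x' y' : R) : 0 < mu -> 0 < a -> 0 < b -> 0 < x -> 0 < y ->
  0 < x' -> 0 < y' ->
  a * (x * y) / (x' * y') <= b -> mu * x / (b * y') <= mu * x' / (a * y).
Proof.
move=> m0 a0 b0 x0 y0 x'0 y'0 H.
rewrite ler_pdivrMr ?mulr_gt0 // in H.
rewrite -subr_ge0.
have -> : mu * x' / (a * y) - mu * x / (b * y') =
   mu * (b * (x' * y') - a * (x * y)) / (a * y * (b * y')).
  by field; rewrite !gt_eqF.
by rewrite divr_ge0 ?mulr_ge0 ?subr_ge0 // ltW // !mulr_gt0.
Qed.




Theorem theorem4p3 (R : realType) (n m p : nat)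
  (X : set 'cV[R]_n) (Y : set 'cV[R]_m)
  (f : 'cV[R]_n -> R) (g : 'cV[R]_m -> R)
  (Phi : 'cV[R]_n -> 'cV[R]_p) (Psi : 'cV[R]_m -> 'cV[R]_p)
  (DPhi : 'cV[R]_n -> 'M[R]_(p, n)) (DPsi : 'cV[R]_m -> 'M[R]_(p, m))
  (rho mu : R) (eta : nat -> R)
  (x xb : nat -> 'cV[R]_n) (y yb : nat -> 'cV[R]_m) (lam lb : nat -> 'cV[R]_p)
  (t : nat) :
  (* two-block Spice setting *)
  X !=set0 -> closed X -> convex_set_cv X ->
  Y !=set0 -> closed Y -> convex_set_cv Y ->
  convex_fun f -> convex_fun g ->
  (forall i : 'I_p, convex_fun (fun z => Phi z i 0)) ->
  (forall i : 'I_p, convex_fun (fun z => Psi z i 0)) ->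
  C1_with_jacobian Phi DPhi -> C1_with_jacobian Psi DPsi ->
  0 < rho -> 1 < mu -> (forall k, 0 < eta k) ->
  X (x 0%N) -> Y (y 0%N) -> nonneg (lam 0%N) ->
  (forall k, 0 < Rfun DPhi DPsi (x k) (y k)) ->
  (forall k, 0 < Rfun DPhi DPsi (xb k) (yb k)) ->
  (* the iteration, with r_k and s_k written out *)
  let r k := (eta k)^-1 * Num.sqrt (Rfun DPhi DPsi (x k) (y k)) in
  let s k := mu * Rfun DPhi DPsi (xb k) (yb k)
             / (eta k * Num.sqrt (Rfun DPhi DPsi (x k) (y k))) in
  (forall k, X (xb k) /\ forall z, X z ->
     rho * f (xb k) + (eta k)^-1 * dotv (lam k) (Phi (xb k))
       + r k / 2 * sqn (xb k - x k)
     <= rho * f z + (eta k)^-1 * dotv (lam k) (Phi z) + r k / 2 * sqn (z - x k)) ->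
  (forall k, Y (yb k) /\ forall z, Y z ->
     rho * g (yb k) + (eta k)^-1 * dotv (lam k) (Psi (yb k))
       + r k / 2 * sqn (yb k - y k)
     <= rho * g z + (eta k)^-1 * dotv (lam k) (Psi z) + r k / 2 * sqn (z - y k)) ->
  (forall k, lb k = posPart (lam k + (eta k * s k)^-1 *: (Phi (xb k) + Psi (yb k)))) ->
  (* w^{k+1} = w^k - M_k (w^k - wbar^k), blockwise *)
  (forall k, x k.+1 = x k - ((x k - xb k)
       - (eta k * r k)^-1 *: ((DPhi (xb k))^T *m (lam k - lb k)))) ->
  (forall k, y k.+1 = y k - ((y k - yb k)
       - (eta k * r k)^-1 *: ((DPsi (yb k))^T *m (lam k - lb k)))) ->
  (forall k, lam k.+1 = lam k - (lam k - lb k)) ->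
  (* step-size condition for k = 1..t *)
  (0 < t)%N ->
  (forall k, (1 <= k <= t)%N ->
     Num.max
       (eta k.-1 * Num.sqrt (Rfun DPhi DPsi (x k) (y k)
                             / Rfun DPhi DPsi (x k.-1) (y k.-1)))
       (eta k.-1 * (Rfun DPhi DPsi (xb k) (yb k)
                    * Num.sqrt (Rfun DPhi DPsi (x k.-1) (y k.-1)))
        / (Rfun DPhi DPsi (xb k.-1) (yb k.-1)
           * Num.sqrt (Rfun DPhi DPsi (x k) (y k))))
     <= eta k) ->
  (* averages *)
  let S := \sum_(0 <= k < t.+1) (eta k)^-1 in
  let xu := (t.+1%:R)^-1 *: \sum_(0 <= k < t.+1) xb k in
  let yu := (t.+1%:R)^-1 *: \sum_(0 <= k < t.+1) yb k in
  let eta_avg := t.+1%:R / S in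
  let xw := S^-1 *: \sum_(0 <= k < t.+1) ((eta k)^-1 *: xb k) in
  let yw := S^-1 *: \sum_(0 <= k < t.+1) ((eta k)^-1 *: yb k) in
  let lw := S^-1 *: \sum_(0 <= k < t.+1) ((eta k)^-1 *: lb k) in
  let H0norm xs ys ls :=
    Num.sqrt (Rfun DPhi DPsi (x 0%N) (y 0%N)) * sqn (xs - x 0%N)
    + Num.sqrt (Rfun DPhi DPsi (x 0%N) (y 0%N)) * sqn (ys - y 0%N)
    + mu * Rfun DPhi DPsi (xb 0%N) (yb 0%N)
      / Num.sqrt (Rfun DPhi DPsi (x 0%N) (y 0%N)) * sqn (ls - lam 0%N) in
  let RHS xs ys ls := (2 * eta 0%N * rho * t.+1%:R)^-1 * H0norm xs ys ls in
  (X xw /\ Y yw /\ nonneg lw) /\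
  (forall xs ys ls, X xs -> Y ys -> nonneg ls ->
     f xu + g yu - (f xs + g ys)
     + (eta_avg * rho)^-1 *
       (dotv (xw - xs) ((DPhi xs)^T *m ls)
        + dotv (yw - ys) ((DPsi ys)^T *m ls)
        + dotv (lw - ls) (- Phi xs - Psi ys))
     <= RHS xs ys ls) /\
  (forall xs ys ls,
     (forall alpha : R, 0 < alpha -> rho = t.+1%:R `^ alpha ->
        RHS xs ys ls = H0norm xs ys ls / (2 * eta 0%N)
                       / t.+1%:R `^ (1 + alpha)) /\
     (forall beta : R, 0 < beta -> rho = expR (beta * t%:R) ->
        RHS xs ys ls = H0norm xs ys ls / (2 * eta 0%N)
                       / (expR (beta * t%:R) * t.+1%:R)) /\
     (rho = t.+1%:R ^+ t ->
        RHS xs ys ls = H0norm xs ys ls / (2 * eta 0%N) / t.+1%:R ^+ t.+1)).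
Proof.
move=> Xne Xcl Xc Yne Ycl Yc fc gc Phic Psic HPhi HPsi rho0 mu1 eta0 X0 Y0 l00
  Rp Rbp r s Hx Hy Hlb Hx1 Hy1 Hl1 t0 Hst S xu yu eta_avg xw yw lw H0norm RHS.
have Sp : 0 < S by apply: sum_pos => // k _; rewrite invr_gt0.
have Tp : 0 < t.+1%:R :> R by rewrite ltr0n.
split.
  split; [|split].
  - rewrite /xw; apply: (@convex_comb R n X t.+1 (fun k => (eta k)^-1) xb) => //.
      by move=> k _; rewrite invr_gt0.
    by move=> k _; exact: (Hx k).1.
  - rewrite /yw; apply: (@convex_comb R m Y t.+1 (fun k => (eta k)^-1) yb) => //.
      by move=> k _; rewrite invr_gt0.
    by move=> k _; exact: (Hy k).1.
  - rewrite /lw; apply: (@convex_comb R p nonneg t.+1 (fun k => (eta k)^-1) lb) => //.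
    + exact: nonneg_convex.
    + by move=> k _; rewrite invr_gt0.
    + by move=> k _; rewrite Hlb; exact: posPart_nonneg.
split; last first.
  move=> xs ys ls; split; [|split].
  - move=> al al0 er; rewrite /RHS er.
    have Pp : 0 < t.+1%:R `^ al by rewrite powR_gt0.
    rewrite powRD; last by rewrite pnatr_eq0 implybT.
    rewrite powRr1 ?ler0n //.
    by field; rewrite !gt_eqF.
  - move=> be be0 er; rewrite /RHS er.
    have Pp : 0 < expR (be * t%:R) by rewrite expR_gt0.
    by field; rewrite !gt_eqF.
  - move=> er; rewrite /RHS er exprSr.
    have Pp : 0 < t.+1%:R ^+ t :> R by rewrite exprn_gt0.
    by field; rewrite !gt_eqF.
move=> xs ys ls Xs Ys ls0.
set a := (DPhi xs)^T *m ls; set b := (DPsi ys)^T *m ls; set cc := - Phi xs - Psi ys.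
pose T k := rho * (f (xb k) + g (yb k) - (f xs + g ys)) + (eta k)^-1 *
   (dotv (xb k - xs) a + dotv (yb k - ys) b + dotv (lb k - ls) cc).
pose E k := r k * sqn (xs - x k) + r k * sqn (ys - y k) + s k * sqn (ls - lam k).
pose E' k := r k * sqn (xs - x k.+1) + r k * sqn (ys - y k.+1) + s k * sqn (ls - lam k.+1).
have hstep : forall k, T k <= 1 / 2 * E k - 1 / 2 * E' k.
  move=> k.
  exact: (step Xc Yc fc gc Phic Psic HPhi HPsi rho0 mu1 (eta0 k) (Rp k) (Rbp k)
    erefl erefl (Hx k).1 (Hx k).2 (Hy k).1 (Hy k).2 (Hlb k) (Hx1 k) (Hy1 k) (Hl1 k) Xs Ys ls0).
have rpos : forall k, 0 < r k.
  by move=> k; rewrite /r mulr_gt0 ?invr_gt0 ?sqrtr_gt0.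
have spos : forall k, 0 < s k.
  move=> k; rewrite /s divr_gt0 ?mulr_gt0 ?sqrtr_gt0 //.
  exact: lt_trans ltr01 mu1.
have hmon : forall k, (k < t)%N -> r k.+1 <= r k /\ s k.+1 <= s k.
  move=> k kt.
  have := Hst k.+1; rewrite ltnS kt /= => /(_ isT).
  rewrite ge_max => /andP [h1 h2].
  split.
    rewrite /r; apply: mono_r => //; rewrite ?sqrtr_gt0 //.
    by move: h1; rewrite sqrtrM ?sqrtrV ?ler0n //; apply: ltW.
  rewrite /s; apply: mono_s => //; rewrite ?sqrtr_gt0 //.
  exact: lt_trans ltr01 mu1.
have hE : forall k, (k < t)%N -> E k.+1 <= E' k.
  move=> k kt; have [h1 h2] := hmon k kt.
  rewrite /E /E'.
  have := ler_wpM2r (sqn_ge0 (xs - x k.+1)) h1.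
  have := ler_wpM2r (sqn_ge0 (ys - y k.+1)) h1.
  have := ler_wpM2r (sqn_ge0 (ls - lam k.+1)) h2.
  lra.
have tel : forall j, (j <= t)%N ->
    \sum_(0 <= k < j.+1) T k <= 1 / 2 * E 0%N - 1 / 2 * E' j.
  elim => [_|j IH hj]; first by rewrite big_nat1; exact: hstep.
  rewrite big_nat_recr //=.
  have := IH (ltnW hj); have := hstep j.+1; have := hE j hj; lra.
have E't : 0 <= E' t.
  rewrite /E' !addr_ge0 // mulr_ge0 ?sqn_ge0 // ltW //.
have tot : \sum_(0 <= k < t.+1) T k <= 1 / 2 * E 0%N.
  have := tel t (leqnn t); lra.
have Sne : S != 0 by rewrite gt_eqF.
have W1 : \sum_(0 <= k < t.+1) (eta k)^-1 * dotv (xb k - xs) a = S * dotv (xw - xs) a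
  := wdot _ _ _ Sne.
have W2 : \sum_(0 <= k < t.+1) (eta k)^-1 * dotv (yb k - ys) b = S * dotv (yw - ys) b
  := wdot _ _ _ Sne.
have W3 : \sum_(0 <= k < t.+1) (eta k)^-1 * dotv (lb k - ls) cc = S * dotv (lw - ls) cc
  := wdot _ _ _ Sne.
have eqsum : \sum_(0 <= k < t.+1) T k =
   rho * (\sum_(0 <= k < t.+1) f (xb k) + \sum_(0 <= k < t.+1) g (yb k)
          - t.+1%:R * (f xs + g ys))
   + S * (dotv (xw - xs) a + dotv (yw - ys) b + dotv (lw - ls) cc).
  rewrite /T big_split /= -mulr_sumr.
  congr (_ * _ + _).
    by rewrite sumrB big_split /= sumr_const_nat subn0 mulr_natl.
  rewrite (eq_bigr (fun k => (eta k)^-1 * dotv (xb k - xs) a + (eta k)^-1 * dotv (yb k - ys) b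
     + (eta k)^-1 * dotv (lb k - ls) cc)); last by move=> k _; rewrite !mulrDr.
  by rewrite !big_split /= W1 W2 W3 !mulrDr.
have JF : f xu <= t.+1%:R^-1 * \sum_(0 <= k < t.+1) f (xb k) := ujensen xb fc (ltn0Sn t).
have JG : g yu <= t.+1%:R^-1 * \sum_(0 <= k < t.+1) g (yb k) := ujensen yb gc (ltn0Sn t).
have Kp : 0 < t.+1%:R * rho := mulr_gt0 Tp rho0.
have JF' := ler_wpM2l (ltW Kp) JF.
have JG' := ler_wpM2l (ltW Kp) JG.
have eJ1 : t.+1%:R * rho * (t.+1%:R^-1 * \sum_(0 <= k < t.+1) f (xb k))
   = rho * \sum_(0 <= k < t.+1) f (xb k) by field; rewrite gt_eqF.
have eJ2 : t.+1%:R * rho * (t.+1%:R^-1 * \sum_(0 <= k < t.+1) g (yb k))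
   = rho * \sum_(0 <= k < t.+1) g (yb k) by field; rewrite gt_eqF.
rewrite eJ1 in JF'; rewrite eJ2 in JG'.
have sq0 : 0 < Num.sqrt (Rfun DPhi DPsi (x 0%N) (y 0%N)) by rewrite sqrtr_gt0.
have eE0 : E 0%N = (eta 0%N)^-1 * H0norm xs ys ls.
  by rewrite /E /H0norm /r /s; field; rewrite !gt_eqF.
rewrite /RHS /eta_avg.
rewrite -(ler_pM2l Kp).
set G := dotv (xw - xs) a + dotv (yw - ys) b + dotv (lw - ls) cc in eqsum *.
have e1 : t.+1%:R * rho * (f xu + g yu - (f xs + g ys) + (t.+1%:R / S * rho)^-1 * G)
   = t.+1%:R * rho * f xu + t.+1%:R * rho * g yu - t.+1%:R * rho * (f xs + g ys) + S * G.
  by field; rewrite !gt_eqF.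
have e2 : t.+1%:R * rho * ((2 * eta 0%N * rho * t.+1%:R)^-1 * H0norm xs ys ls)
   = 1 / 2 * ((eta 0%N)^-1 * H0norm xs ys ls).
  by field; rewrite !gt_eqF.
rewrite e1 e2 -eE0.
lra.
Qed.
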